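(* Assume Assumptions 2. For every $s\in(0,1)$ there exists $\kappa_0<\infty$, depending only on $\|\nu\|_\infty$, $\|\sigma_0\|_\infty$, $\|\sigma_1\|_\infty$, $K$ and $s$, such that for all $\kappa\ge\kappa_0$, $$\sup_{E\in\mathbb R}\|T_{\kappa,E,s}\|<1,$$ where $\|T_{\kappa,E,s}\|$ is the operator norm on $C(\overline{\mathbb C^+})$ with the sup-norm.
   Context: Assumptions 2: $\nu$ has bounded density (also $\nu$) supported in $[-K,K]$, $K<\infty$; $\sigma$ is a probability measure on $\mathbb R^2$ supported in $[-1,1]^2$ whose marginals $\sigma_0,\sigma_1$ have bounded densities (also denoted $\sigma_0,\sigma_1$). Let $\overline{\mathbb C^+}=\mathbb C^+\cup\mathbb R\cup\{i\infty\}$, $C(\overline{\mathbb C^+})$ the continuous complex functions on $\mathbb C^+\cup\mathbb R$ with a finite limit at infinity. For $\kappa\ge0$, $\mu$ is the law of $q=(r+\kappa p_0,r+\kappa p_1)$ with $r\sim\nu$, $(p_0,p_1)\sim\sigma$ independent. For $z\in\mathbb C^+\cup\mathbb R$, $\phi^\pm_{z,q}(w)=\tfrac12\big(\frac{-1}{w+(z-q_0)/\sqrt2}\pm\frac{-1}{w+(z-q_1)/\sqrt2}\big)$, $\phi^\pm_{z,q}(i\infty)=0$, and $(T_{\kappa,z,s}f)(w)=\int f(\phi^+_{z,q}(w))\big(|\phi^+_{z,q}(w)|^s+|\phi^-_{z,q}(w)|^s\big)d\mu(q)$, $(T_{\kappa,z,s}f)(i\infty)=0$. *)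

(* Defs.v *)
From HB Require Import structures.
From mathcomp Require Import all_boot all_order all_algebra.
From mathcomp Require Import all_classical all_reals all_analysis.
From mathcomp Require Import complex.

Set Implicit Arguments.
Unset Strict Implicit.
Unset Printing Implicit Defensive.

Import Order.TTheory GRing.Theory Num.Theory.
Local Open Scope classical_set_scope.
Local Open Scope ring_scope.

Section Defs.
Context {R : realType}.
Local Notation C := R[i].

Definition cabs (x : C) : R := Normc.normc x.

(* The closed upper half plane C^+ \cup R (the point i\infty is handled
   separately, through the limit value L of a function at infinity). *)
Definition Hbar : set C := [set w | 0 <= complex.Im w].

Definition shift (z : C) (qj : R) : C := (z - (qj%:C)%C) / ((Num.sqrt 2)%:C)%C.

Definition phi_plus (z : C) (q : R * R) (w : C) : C :=
  ((2^-1)%:C)%C * ((- 1) / (w + shift z q.1) + (- 1) / (w + shift z q.2)).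
Definition phi_minus (z : C) (q : R * R) (w : C) : C :=
  ((2^-1)%:C)%C * ((- 1) / (w + shift z q.1) - (- 1) / (w + shift z q.2)).

(* integrand of T_{kappa,z,s} f (w) as a function of q; on the (mu-null) set
   where one of the denominators vanishes it is set to 0 *)
Definition T_integrand (z : C) (s : R) (f : C -> C) (w : C) (q : R * R) : C :=
  if (w + shift z q.1 == 0) || (w + shift z q.2 == 0) then 0
  else f (phi_plus z q w) *
       ((cabs (phi_plus z q w)) `^ s + (cabs (phi_minus z q w)) `^ s)%:C%C.

(* \int F(q) d mu(q), where mu is the law of q = (r + kappa p0, r + kappa p1),
   r ~ nu (Lebesgue density nu) and (p0,p1) ~ sigma independent;
   complex integral = integral of real part + i integral of imaginary part. *)
Definition law_integral (nu : R -> R) (sigma : probability (R * R)%type R)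
    (kappa : R) (F : R * R -> C) : C :=
  let G r (p : R * R) := F (r + kappa * p.1, r + kappa * p.2) in
  Complex
    (Rintegral lebesgue_measure setT
       (fun r => nu r * Rintegral sigma setT (fun p => complex.Re (G r p))))
    (Rintegral lebesgue_measure setT
       (fun r => nu r * Rintegral sigma setT (fun p => complex.Im (G r p)))).

(* (T_{kappa,z,s} f)(w) for finite w; (T f)(i infty) = 0 *)
Definition T_op (nu : R -> R) (sigma : probability (R * R)%type R)
    (kappa : R) (z : C) (s : R) (f : C -> C) (w : C) : C :=
  law_integral nu sigma kappa (T_integrand z s f w).

(* f (with value L at i infty) belongs to C(\overline{C^+}) : continuous on
   C^+ \cup R, with limit L at infinity. *)
Definition in_Cbar (f : C -> C) (L : C) : Prop :=
  (forall w, Hbar w -> forall e : R, 0 < e -> exists2 d : R, 0 < d &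
     forall w', Hbar w' -> cabs (w' - w) < d -> cabs (f w' - f w) < e) /\
  (forall e : R, 0 < e -> exists M : R,
     forall w, Hbar w -> M < cabs w -> cabs (f w - L) < e).

Definition density_assumptions (nu : R -> R) (Nnu K : R) : Prop :=
  measurable_fun setT nu /\
  (forall x, 0 <= nu x) /\
  (\int[lebesgue_measure]_x (nu x)%:E = 1)%E /\
  (forall x, nu x <= Nnu) /\
  (forall x, K < `|x| -> nu x = 0).

Definition sigma_assumptions (sigma : probability (R * R)%type R)
    (sigma0 sigma1 : R -> R) (N0 N1 : R) : Prop :=
  sigma [set p : R * R | `|p.1| <= 1 /\ `|p.2| <= 1] = 1%E /\
  measurable_fun setT sigma0 /\ measurable_fun setT sigma1 /\
  (forall x, 0 <= sigma0 x <= N0) /\ (forall x, 0 <= sigma1 x <= N1) /\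
  (forall A : set R, measurable A ->
     (sigma (A `*` setT) = \int[lebesgue_measure]_(x in A) (sigma0 x)%:E)%E) /\
  (forall A : set R, measurable A ->
     (sigma (setT `*` A) = \int[lebesgue_measure]_(x in A) (sigma1 x)%:E)%E).

End Defs.

(* Main.v *)
Require Import Defs.
From HB Require Import structures.
From mathcomp Require Import all_boot all_order all_algebra.
From mathcomp Require Import all_classical all_reals all_analysis.
From mathcomp Require Import complex.
From mathcomp Require Import ring lra.
From mathcomp Require Import measurable_realfun.
Import Order.TTheory GRing.Theory Num.Theory.
Local Open Scope classical_set_scope.
Local Open Scope ring_scope.
Section A.
Context {d} {T : measurableType d} {R : realType} (mu : {measure set T -> \bar R}).
Local Open Scope ereal_scope.

Lemma le_nn (f g : T -> \bar R) : (forall x, 0 <= f x) -> (forall x, f x <= g x) ->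
  \int[mu]_x f x <= \int[mu]_x g x.
Proof.
move=> f0 fg.
rewrite (ge0_integralTE mu f0) (ge0_integralTE mu (fun x => le_trans (f0 x) (fg x))).
apply: ereal_sup_le => _ [h hf <-]; exists h => //= x.
exact: le_trans (hf x) (fg x).
Qed.

Lemma absRint_le (g : T -> R) (H : T -> \bar R) (b : R) :
  (forall x, (`|g x|)%:E <= H x) -> \int[mu]_x H x <= b%:E ->
  (`|Rintegral mu setT g| <= b)%R.
Proof.
move=> gH Hb.
have H0 x : 0 <= H x by exact: le_trans (gH x).
have P0 : 0 <= \int[mu]_x ((fun x => (g x)%:E)^\+ x) by apply: integral_ge0 => x _; exact: funepos_ge0.
have N0 : 0 <= \int[mu]_x ((fun x => (g x)%:E)^\- x) by apply: integral_ge0 => x _; exact: funeneg_ge0.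
have Pb : \int[mu]_x ((fun x => (g x)%:E)^\+ x) <= b%:E.
  apply: le_trans Hb; apply: le_nn => // x; apply: le_trans (gH x).
  rewrite funeposE /= -EFin_max lee_fin.
  by rewrite ge_max normr_ge0 ler_norm.
have Nb : \int[mu]_x ((fun x => (g x)%:E)^\- x) <= b%:E.
  apply: le_trans Hb; apply: le_nn => // x; apply: le_trans (gH x).
  rewrite funenegE /= -EFin_max lee_fin.
  by rewrite ge_max normr_ge0 -normrN ler_norm.
rewrite /Rintegral integralE.
move: P0 N0 Pb Nb.
case: (\int[mu]_x _) => [p| |] //; case: (\int[mu]_x _) => [n| |] //.
rewrite !lee_fin => p0 n0 pb nb /=.
rewrite ler_norml; apply/andP; split; lra.
Qed.
End A.
Section B.
Context {R : realType}.

Lemma eseries_le (v : nat -> R) (b : R) : (forall k, 0 <= v k) ->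
  (forall n, \sum_(0 <= k < n) v k <= b) -> (\sum_(k <oo) (v k)%:E <= b%:E)%E.
Proof.
move=> v0 vb; apply: lime_le.
  by apply: is_cvg_nneseries => n _ _; rewrite lee_fin.
by apply: nearW => n; rewrite sumEFin lee_fin.
Qed.

Lemma geo_le (rho : R) : 0 <= rho < 1 -> forall n, \sum_(0 <= k < n) rho ^+ k <= (1 - rho)^-1.
Proof.
move=> /andP[r0 r1] n.
have E : (\sum_(0 <= k < n) rho ^+ k) * (1 - rho) = 1 - rho ^+ n.
  elim: n => [|n IH]; first by rewrite big_geq // mul0r expr0 subrr.
  by rewrite big_nat_recr //= mulrDl IH exprS; ring.
have h : 0 < 1 - rho by lra.
rewrite -[X in X <= _](mulfK (lt0r_neq0 h)) E -[X in _ <= X]mul1r ler_pM2r ?invr_gt0 //.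
by rewrite lerBlDr lerDl exprn_ge0.
Qed.

Lemma powR_exp (x s : R) n : 0 <= x -> (x ^+ n) `^ s = (x `^ s) ^+ n.
Proof.
move=> x0; rewrite -powR_mulrn // powRAC powR_mulrn //; exact: powR_ge0.
Qed.

Lemma pick_k (t : R) : 0 < t -> t < 1 -> exists k, (2^-1) ^+ k.+1 <= t < (2^-1) ^+ k.
Proof.
move=> t0 t1.
have ex : exists n, (fun n => (2^-1) ^+ n <= t) n.
  have ti : 0 <= t^-1 by rewrite invr_ge0 ltW.
  exists (Num.Def.archi_bound t^-1) => /=.
  set n := Num.Def.archi_bound _.
  have h1 := archi_boundP ti.
  have h2 : (n%:R : R) < 2 ^+ n.
    have : (n < 2 ^ n)%N by apply: ltn_expl.
    by rewrite -(ltr_nat R) natrX.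
  rewrite exprVn -[X in _ <= X](invrK t) lef_pV2 ?posrE ?invr_gt0 ?exprn_gt0 //.
  lra.
pose k := ex_minn ex.
have : (2^-1) ^+ k <= t by rewrite /k; case: ex_minnP.
have kmin : forall j, (2^-1) ^+ j <= t -> (k <= j)%N by rewrite /k; case: ex_minnP.
case: k kmin => [|j] kmin hk.
  by move: hk; rewrite expr0; lra.
exists j; rewrite hk /= ltNge; apply/negP => /kmin; rewrite ltnn; done.
Qed.

Lemma point_bound (s k u z : R) : 0 <= s -> 0 < k -> 0 < u -> k * z <= u ->
  exists n, (u^-1) `^ s <= (k^-1) `^ s * (n == 0)%:R
     + (k^-1) `^ s * (2 `^ s) ^+ n.+1 * (z < (2^-1) ^+ n)%R%:R.
Proof.
move=> s0 k0 u0 kzu.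
have c0 : 0 <= (k^-1) `^ s by exact: powR_ge0.
have w0 n : 0 <= (k^-1) `^ s * (2 `^ s) ^+ n.+1 * (z < (2^-1) ^+ n)%R%:R.
  by rewrite !mulr_ge0 // exprn_ge0 // powR_ge0.
have [ku|uk] := leP k u.
  exists 0%N; rewrite eqxx mulr1.
  rewrite -[X in X <= _]addr0; apply: lerD; last exact: w0.
  apply: ge0_ler_powR => //; rewrite ?nnegrE ?invr_ge0; try exact: ltW.
  by rewrite lef_pV2 ?posrE.
have uk1 : u / k < 1 by rewrite ltr_pdivrMr // mul1r.
have [n /andP[h1 h2]] := @pick_k (u / k) (divr_gt0 u0 k0) uk1.
exists n.
have zn : z < (2^-1) ^+ n.
  apply: le_lt_trans h2; rewrite ler_pdivlMr // mulrC //.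
rewrite zn mulr1.
rewrite -[X in X <= _]add0r; apply: lerD; first by rewrite mulr_ge0 // ler0n.
have -> : (k^-1) `^ s * (2 `^ s) ^+ n.+1 = (k^-1 * 2 ^+ n.+1) `^ s.
  by rewrite powRM ?invr_ge0 ?exprn_ge0 ?powR_exp //; exact: ltW.
have ui : u^-1 \is Num.nneg by rewrite nnegrE invr_ge0; exact: ltW.
have ki : k^-1 * 2 ^+ n.+1 \is Num.nneg.
  by rewrite nnegrE mulr_ge0 ?invr_ge0 ?exprn_ge0 //; exact: ltW.
apply: ge0_ler_powR => //.
have e1 : u^-1 = k^-1 * (u / k)^-1.
  by rewrite invf_div mulrA mulVf ?mul1r // lt0r_neq0.
rewrite e1; apply: ler_wpM2l; first by rewrite invr_ge0; exact: ltW.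
move: h1; rewrite exprVn -[X in _ <= X](invrK (u / k)) lef_pV2 //.
  by rewrite posrE exprn_gt0.
by rewrite posrE invr_gt0 divr_gt0.
Qed.
End B.
Section C.
Context {R : realType}.
Local Notation C := R[i].

Lemma cabs_ge0 (x : C) : 0 <= cabs x.
Proof. by case: x => a b; rewrite /cabs /=; exact: sqrtr_ge0. Qed.

Lemma cabs_real (a : R) : cabs (a%:C)%C = `|a|.
Proof. by rewrite /cabs /= expr0n /= addr0 sqrtr_sqr. Qed.

Lemma cabsM (x y : C) : cabs (x * y) = cabs x * cabs y.
Proof. exact: Normc.normcM. Qed.

Lemma cabsV (x : C) : cabs x^-1 = (cabs x)^-1.
Proof. exact: Normc.normcV. Qed.

Lemma cabsN (x : C) : cabs (- x) = cabs x.
Proof. by case: x => a b; rewrite /cabs /= !sqrrN. Qed.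

Lemma cabsD (x y : C) : cabs (x + y) <= cabs x + cabs y.
Proof. exact: le_normcD. Qed.

Lemma cabs_Re (x : C) : `|complex.Re x| <= cabs x.
Proof.
case: x => a b; rewrite /cabs /= -sqrtr_sqr.
by rewrite ler_sqrt ?lerDl ?sqr_ge0 // addr_ge0 // sqr_ge0.
Qed.

Lemma cabs_Im (x : C) : `|complex.Im x| <= cabs x.
Proof.
case: x => a b; rewrite /cabs /= -sqrtr_sqr.
by rewrite ler_sqrt ?lerDr ?sqr_ge0 // addr_ge0 // sqr_ge0.
Qed.

Lemma cabs_Complex (u v : R) : cabs (Complex u v) <= `|u| + `|v|.
Proof.
have -> : Complex u v = (u%:C)%C + (v%:C)%C * 'i%C.
  by apply/eqP; rewrite eq_complex /= !mulr0 !mul0r !mulr1 !subr0 !addr0 !add0r !eqxx.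
apply: le_trans (cabsD _ _) _; rewrite cabsM !cabs_real.
by rewrite /cabs /= expr0n expr1n /= add0r sqrtr1 mulr1.
Qed.

Lemma shiftE (E t : R) : Defs.shift (real_complex R E) t = real_complex R ((E - t) / Num.sqrt 2).
Proof. by rewrite /Defs.shift rmorphM rmorphB fmorphV. Qed.

Lemma Re_addr (w : C) (a : R) : complex.Re (w + (a%:C)%C) = complex.Re w + a.
Proof. by case: w. Qed.

Lemma Im_addr (w : C) (a : R) : complex.Im (w + (a%:C)%C) = complex.Im w.
Proof. by case: w => x y /=; rewrite addr0. Qed.


Lemma Im_negV (x : C) : 0 <= complex.Im x -> 0 <= complex.Im ((-1) / x).
Proof.
case: x => a b /= hb.
rewrite mulN1r opprK oppr0 mul0r addr0 divr_ge0 //.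
by rewrite addr_ge0 // sqr_ge0.
Qed.

Lemma cabs_negV (x : C) : cabs ((-1) / x) = (cabs x)^-1.
Proof.
have c1 : cabs (1 : C) = 1 by rewrite /cabs /= expr1n expr0n /= addr0 sqrtr1.
by rewrite cabsM cabsV cabsN c1 mul1r.
Qed.


Lemma Im_mulr (c : R) (y : C) : complex.Im ((c%:C)%C * y) = c * complex.Im y.
Proof. by case: y => a b /=; rewrite mul0r addr0. Qed.

Lemma Im_add (x y : C) : complex.Im (x + y) = complex.Im x + complex.Im y.
Proof. by case: x; case: y. Qed.

Lemma Hbar_phi (E : R) (q : R * R) (w : C) : Hbar w ->
  Hbar (phi_plus (real_complex R E) q w).
Proof.
rewrite /Hbar /= => hw; rewrite /phi_plus Im_mulr Im_add.
rewrite mulr_ge0 ?invr_ge0 // addr_ge0 // Im_negV // shiftE Im_addr //.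
Qed.

Lemma cabs_phi_plus (z : C) (q : R * R) (w : C) :
  cabs (phi_plus z q w) <= ((cabs (w + Defs.shift z q.1))^-1 + (cabs (w + Defs.shift z q.2))^-1) / 2.
Proof.
rewrite /phi_plus cabsM cabs_real ger0_norm ?invr_ge0 // mulrC.
rewrite ler_pM2r ?invr_gt0 //; apply: le_trans (cabsD _ _) _.
by rewrite !cabs_negV.
Qed.

Lemma cabs_phi_minus (z : C) (q : R * R) (w : C) :
  cabs (phi_minus z q w) <= ((cabs (w + Defs.shift z q.1))^-1 + (cabs (w + Defs.shift z q.2))^-1) / 2.
Proof.
rewrite /phi_minus cabsM cabs_real ger0_norm ?invr_ge0 // mulrC.
rewrite ler_pM2r ?invr_gt0 //; apply: le_trans (cabsD _ _) _.
by rewrite cabsN !cabs_negV.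
Qed.

End C.
Section D.
Context {R : realType}.
Local Notation C := R[i].

Lemma powR_half (s a b c : R) : 0 <= s -> 0 <= a -> 0 <= b -> 0 <= c ->
  c <= (a + b) / 2 -> c `^ s <= a `^ s + b `^ s.
Proof.
move=> s0 a0 b0 c0 cab.
have [ab|ba] := leP a b.
  have cb : c <= b by apply: le_trans cab _; rewrite ler_pdivrMr //; lra.
  apply: le_trans (_ : b `^ s <= _); last by rewrite lerDr powR_ge0.
  by apply: ge0_ler_powR => //; rewrite nnegrE.
have ca : c <= a by apply: le_trans cab _; rewrite ler_pdivrMr //; lra.
apply: le_trans (_ : a `^ s <= _); last by rewrite lerDl powR_ge0.
by apply: ge0_ler_powR => //; rewrite nnegrE.
Qed.

Lemma integrand_bound (E s B : R) (f : C -> C) (w : C) (q : R * R) :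
  0 <= s -> 0 <= B -> (forall w, Hbar w -> cabs (f w) <= B) -> Hbar w ->
  T_integrand (real_complex R E) s f w q = 0 \/
  (w + Defs.shift (real_complex R E) q.1 != 0 /\ w + Defs.shift (real_complex R E) q.2 != 0 /\
   cabs (T_integrand (real_complex R E) s f w q) <=
     2 * B * (((cabs (w + Defs.shift (real_complex R E) q.1))^-1) `^ s +
              ((cabs (w + Defs.shift (real_complex R E) q.2))^-1) `^ s)).
Proof.
move=> s0 B0 fB hw; rewrite /T_integrand.
case: ifP => [_|/negbT]; first by left.
rewrite negb_or => /andP[h1 h2]; right; split => //; split => //.
set a := (cabs _)^-1; set b := (cabs _)^-1.
have a0 : 0 <= a by rewrite invr_ge0 cabs_ge0.
have b0 : 0 <= b by rewrite invr_ge0 cabs_ge0.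
rewrite cabsM cabs_real ger0_norm; last by rewrite addr_ge0 ?powR_ge0.
rewrite [2 * B]mulrC -mulrA; apply: ler_pM => //; first exact: cabs_ge0.
  by rewrite addr_ge0 ?powR_ge0.
  by apply: fB; exact: Hbar_phi.
rewrite mulr2n mulrDl mul1r; apply: lerD; apply: powR_half => //;
  try exact: cabs_ge0.
  exact: cabs_phi_plus.
exact: cabs_phi_minus.
Qed.

Lemma sqrt2_ge1 : 1 <= Num.sqrt (2 : R).
Proof.
have h : Num.sqrt (1:R) <= Num.sqrt (2 : R) by rewrite ler_sqrt //; lra.
by rewrite sqrtr1 in h.
Qed.

Lemma sqrt2_le2 : Num.sqrt (2 : R) <= 2.
Proof.
have h : Num.sqrt (2:R) <= Num.sqrt (2 ^+ 2) by rewrite ler_sqrt ?expr2 //; lra.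
by rewrite sqrtr_sqr ger0_norm in h.
Qed.

Lemma inv_bound (s E t : R) (w : C) : 0 <= s <= 1 ->
  w + Defs.shift (real_complex R E) t != 0 ->
  0 < Num.sqrt 2 * cabs (w + Defs.shift (real_complex R E) t) /\
  `|Num.sqrt 2 * complex.Re w + E - t| <= Num.sqrt 2 * cabs (w + Defs.shift (real_complex R E) t) /\
  ((cabs (w + Defs.shift (real_complex R E) t))^-1) `^ s <=
     2 * ((Num.sqrt 2 * cabs (w + Defs.shift (real_complex R E) t))^-1) `^ s.
Proof.
move=> /andP[s0 s1] hx.
set x := w + _.
have s2 : 0 < Num.sqrt (2 : R) by rewrite sqrtr_gt0.
have xp : 0 < cabs x.
  rewrite lt_neqAle cabs_ge0 andbT; apply/eqP => /esym/Normc.eq0_normc.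
  by move/eqP: hx.
split; first exact: mulr_gt0.
split.
  have := @cabs_Re R x; rewrite /x shiftE Re_addr => h.
  have -> : Num.sqrt 2 * complex.Re w + E - t = Num.sqrt 2 * (complex.Re w + (E - t) / Num.sqrt 2).
    by rewrite mulrDr mulrCA mulfV ?mulr1 ?addrA // gt_eqF.
  by rewrite normrM ger0_norm ?ler_pM2l // ltW.
rewrite invfM powRM ?invr_ge0 ?cabs_ge0 ?sqrtr_ge0 //.
rewrite [X in _ <= X]mulrA ler_peMl ?powR_ge0 //.
have si : 0 < (Num.sqrt (2:R))^-1 <= 1.
  by rewrite invr_gt0 s2 /= invf_le1 // sqrt2_ge1.
apply: le_trans (_ : 2 * (Num.sqrt 2)^-1 <= _).
  by rewrite ler_pdivlMr // mul1r sqrt2_le2.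
by rewrite ler_pM2l // ger1_powR.
Qed.
End D.
Section E.
Context {R : realType}.

Definition Ib (m : R) (n : nat) : set R := `](m - (2^-1) ^+ n), (m + (2^-1) ^+ n)[%classic.

Definition tt (s k m : R) (n : nat) (x : R) : R :=
  ((k^-1) `^ s * (n == 0)%:R + (k^-1) `^ s * (2 `^ s) ^+ n.+1 * \1_(Ib m n) x)%R.

Lemma tt_ge0 s k m n x : (0 <= tt s k m n x)%R.
Proof. by rewrite /tt addr_ge0 // !mulr_ge0 ?powR_ge0 ?exprn_ge0 ?powR_ge0. Qed.

Lemma Ib_ind m n x : \1_(Ib m n) x = (`|x - m| < (2^-1) ^+ n)%R%:R :> R.
Proof.
rewrite /indic /Ib; congr (_%:R); congr (nat_of_bool _).
by rewrite mem_setE in_itv /= distrC ltr_distlC.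
Qed.

Lemma indX1 (A : set R) (p : R * R) : \1_A p.1 = \1_(A `*` setT) p :> R.
Proof.
rewrite /indic; congr (_%:R); congr (nat_of_bool _).
by apply/idP/idP => [/set_mem h|/set_mem [h _]]; apply: mem_set.
Qed.

Lemma indX2 (A : set R) (p : R * R) : \1_A p.2 = \1_(setT `*` A) p :> R.
Proof.
rewrite /indic; congr (_%:R); congr (nat_of_bool _).
by apply/idP/idP => [/set_mem h|/set_mem [_ h]]; apply: mem_set.
Qed.

Lemma single_bound (s k u m p : R) : 0 <= s -> 0 < k -> 0 < u -> k * `|p - m| <= u ->
  (((u^-1) `^ s)%:E <= \sum_(n <oo) (tt s k m n p)%:E)%E.
Proof.
move=> s0 k0 u0 h; have [n hn] := @point_bound R s k u _ s0 k0 u0 h.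
apply: (@le_trans _ _ (tt s k m n p)%:E).
  by rewrite lee_fin /tt Ib_ind.
apply: le_trans (nneseries_lim_ge n.+1 _); last by move=> *; rewrite lee_fin tt_ge0.
rewrite big_nat_recr //=; apply: leeDr.
by apply: sume_ge0 => *; rewrite lee_fin tt_ge0.
Qed.

Lemma measurable_Ib m n : measurable (Ib m n).
Proof. exact: measurable_itv. Qed.

Lemma int_Ib (sg : R -> R) (N m : R) n :
  measurable_fun setT sg -> (forall x, 0 <= sg x <= N) ->
  (\int[lebesgue_measure]_(x in Ib m n) (sg x)%:E <= (N * (2 * (2^-1) ^+ n))%:E)%E.
Proof.
move=> msg hsg.
apply: le_trans (@ge0_le_integral _ _ _ lebesgue_measure _ (measurable_Ib m n) _ (fun=> N%:E) _ _ _ _) _.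
- by move=> x _; rewrite lee_fin; case/andP: (hsg x).
- by apply/measurable_EFinP; exact: measurable_funTS.
- exact: measurable_cst.
- by move=> x _; rewrite lee_fin; case/andP: (hsg x).
rewrite integral_cst; last exact: measurable_Ib.
have rp : (0 < (2^-1 : R) ^+ n) by rewrite exprn_gt0 // invr_gt0.
have E2 : lebesgue_measure (Ib m n) = (2 * 2^-1 ^+ n)%:E.
  have L := @lebesgue_measure_itv R `](m - 2^-1 ^+ n), (m + 2^-1 ^+ n)[.
  rewrite /= lte_fin in L.
  have hh : (m - 2^-1 ^+ n < m + 2^-1 ^+ n) by lra.
  rewrite hh -EFinD in L; apply: eq_trans L _; congr (_%:E); lra.
apply: (@le_trans _ _ (N%:E * (2 * 2^-1 ^+ n)%:E)%E).
  by rewrite le_eqVlt; apply/orP; left; apply/eqP; congr (_ * _)%E; exact: E2.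
by rewrite -EFinM.
Qed.
End E.
Section F.
Context {R : realType}.
Variable sigma : probability (R * R)%type R.

Definition termf (B s k m : R) (n : nat) (p : R * R) : R :=
  4 * B * (tt s k m n p.1 + tt s k m n p.2).

Lemma int_term (sg0 sg1 : R -> R) (N0 N1 B s k m : R) (n : nat) :
  0 <= B ->
  measurable_fun setT sg0 -> measurable_fun setT sg1 ->
  (forall x, 0 <= sg0 x <= N0) -> (forall x, 0 <= sg1 x <= N1) ->
  (forall A : set R, measurable A ->
     (sigma (A `*` setT) = \int[lebesgue_measure]_(x in A) (sg0 x)%:E)%E) ->
  (forall A : set R, measurable A ->
     (sigma (setT `*` A) = \int[lebesgue_measure]_(x in A) (sg1 x)%:E)%E) ->
  (\int[sigma]_p (termf B s k m n p)%:E <=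
   (4 * B * (2 * (k^-1) `^ s * (n == 0)%:R + (k^-1) `^ s * (2 `^ s) ^+ n.+1 *
      ((N0 + N1) * (2 * (2^-1) ^+ n)))) %:E)%E.
Proof.
move=> B0 m0 m1 h0 h1 mg0 mg1.
set c := 2 * (k^-1) `^ s * (n == 0)%:R.
set W := (k^-1) `^ s * (2 `^ s) ^+ n.+1.
have c0 : 0 <= c by rewrite /c !mulr_ge0 ?powR_ge0.
have W0 : 0 <= W by rewrite /W !mulr_ge0 ?powR_ge0 ?exprn_ge0 ?powR_ge0.
set A1 := Ib m n `*` [set: R].
set A2 := [set: R] `*` Ib m n.
have mA1 : measurable A1 by apply: measurableX => //; exact: measurable_Ib.
have mA2 : measurable A2 by apply: measurableX => //; exact: measurable_Ib.
have mi1 : measurable_fun setT (fun p => (\1_A1 p)%:E : \bar R).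
  by apply/measurable_EFinP; exact: measurable_indic.
have mi2 : measurable_fun setT (fun p => (\1_A2 p)%:E : \bar R).
  by apply/measurable_EFinP; exact: measurable_indic.
have eq : (fun p => (termf B s k m n p)%:E) = (fun p => (4 * B)%:E *
   (c%:E + W%:E * ((\1_A1 p)%:E + (\1_A2 p)%:E)))%E.
  apply: funext => p; rewrite /termf /tt /A1 /A2 -indX1 -indX2 /c /W.
  rewrite -!EFinD -!EFinM; congr (_%:E); ring.
rewrite eq.
have i0 p : (0 <= (\1_A1 p)%:E + (\1_A2 p)%:E :> \bar R)%E.
  by rewrite -EFinD lee_fin addr_ge0.
have Y0 p : (0 <= W%:E * ((\1_A1 p)%:E + (\1_A2 p)%:E) :> \bar R)%E.
  by apply: mule_ge0 => //; rewrite lee_fin.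
have X0 p : (0 <= c%:E + W%:E * ((\1_A1 p)%:E + (\1_A2 p)%:E) :> \bar R)%E.
  by apply: adde_ge0 => //; rewrite lee_fin.
have mI : measurable_fun setT (fun p => ((\1_A1 p)%:E + (\1_A2 p)%:E) : \bar R)%E.
  exact: emeasurable_funD.
have mY : measurable_fun setT (fun p => W%:E * ((\1_A1 p)%:E + (\1_A2 p)%:E) : \bar R)%E.
  exact: measurable_funeM.
have mX : measurable_fun setT (fun p => c%:E + W%:E * ((\1_A1 p)%:E + (\1_A2 p)%:E) : \bar R)%E.
  by apply: emeasurable_funD => //; exact: measurable_cst.
rewrite (ge0_integralZl_EFin _ _ (fun p _ => X0 p) mX); last by rewrite mulr_ge0.
have c0' : forall p, [set: R * R] p -> (0 <= (fun=> c%:E) p :> \bar R)%E.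
  by move=> p _; rewrite lee_fin.
rewrite (@ge0_integralD _ _ _ sigma setT measurableT (fun=> c%:E) (fun p => W%:E * ((\1_A1 p)%:E + (\1_A2 p)%:E))%E c0' (measurable_cst _) (fun p _ => Y0 p) mY).
rewrite (ge0_integralZl_EFin _ _ (fun p _ => i0 p) mI) //.
have j1 : forall p, [set: R * R] p -> (0 <= (\1_A1 p)%:E :> \bar R)%E by move=> p _; rewrite lee_fin.
have j2 : forall p, [set: R * R] p -> (0 <= (\1_A2 p)%:E :> \bar R)%E by move=> p _; rewrite lee_fin.
rewrite (@ge0_integralD _ _ _ sigma setT measurableT (fun p => (\1_A1 p)%:E) (fun p => (\1_A2 p)%:E) j1 mi1 j2 mi2).
rewrite !integral_indic // !setIT.
have ic : (\int[sigma]_p (c%:E) = c%:E)%E.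
  rewrite integral_cst // -[X in _ = X]mule1; congr (_ * _)%E; exact: probability_setT.
have s1 : (sigma A1 <= (N0 * (2 * 2^-1 ^+ n))%:E)%E.
  by rewrite /A1 mg0; [exact: int_Ib | exact: measurable_Ib].
have s2 : (sigma A2 <= (N1 * (2 * 2^-1 ^+ n))%:E)%E.
  by rewrite /A2 mg1; [exact: int_Ib | exact: measurable_Ib].
rewrite ic.
apply: (@le_trans _ _ ((4 * B)%:E * (c%:E + W%:E * ((N0 * (2 * 2^-1 ^+ n))%:E + (N1 * (2 * 2^-1 ^+ n))%:E)))%E).
  apply: lee_wpmul2l; first by rewrite lee_fin mulr_ge0.
  apply: leeD2l; apply: lee_wpmul2l; first by rewrite lee_fin.
  exact: leeD.
rewrite -!EFinD -!EFinM lee_fin le_eqVlt; apply/orP; left; apply/eqP; ring.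
exact: measurableT.
Qed.
End F.
Section G.
Context {R : realType}.
Local Notation C := R[i].

Lemma mterm (B s k m : R) n : measurable_fun setT (fun p : R * R => (termf B s k m n p)%:E).
Proof.
set c := 2 * (k^-1) `^ s * (n == 0)%:R.
set W := (k^-1) `^ s * (2 `^ s) ^+ n.+1.
set A1 := Ib m n `*` [set: R].
set A2 := [set: R] `*` Ib m n.
have mA1 : measurable A1 by apply: measurableX => //; exact: measurable_Ib.
have mA2 : measurable A2 by apply: measurableX => //; exact: measurable_Ib.
have mi1 : measurable_fun setT (fun p => (\1_A1 p)%:E : \bar R).
  by apply/measurable_EFinP; exact: measurable_indic.
have mi2 : measurable_fun setT (fun p => (\1_A2 p)%:E : \bar R).
  by apply/measurable_EFinP; exact: measurable_indic.
have -> : (fun p => (termf B s k m n p)%:E) = (fun p => (4 * B)%:E *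
   (c%:E + W%:E * ((\1_A1 p)%:E + (\1_A2 p)%:E)))%E.
  apply: funext => p; rewrite /termf /tt /A1 /A2 -indX1 -indX2 /c /W.
  rewrite -!EFinD -!EFinM; congr (_%:E); ring.
apply: measurable_funeM; apply: emeasurable_funD; first exact: measurable_cst.
by apply: measurable_funeM; exact: emeasurable_funD.
Qed.

Lemma termf_ge0 (B s k m : R) (n : nat) (p : R * R) : 0 <= B -> 0 <= termf B s k m n p.
Proof. by move=> B0; rewrite /termf !mulr_ge0 // addr_ge0 // tt_ge0. Qed.

Lemma series_termf (B s k m : R) (p : R * R) : 0 <= B ->
  (\sum_(n <oo) (termf B s k m n p)%:E =
   (4 * B)%:E * (\sum_(n <oo) (tt s k m n p.1)%:E + \sum_(n <oo) (tt s k m n p.2)%:E))%E.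
Proof.
move=> B0; rewrite -nneseriesD; last 2 first.
  by move=> *; rewrite lee_fin tt_ge0.
  by move=> *; rewrite lee_fin tt_ge0.
rewrite -nneseriesZl; last by move=> *; rewrite adde_ge0 // lee_fin tt_ge0.
by apply: congr_lim; apply: funext => N; apply: eq_bigr => i _; rewrite /termf EFinM EFinD.
Qed.

End G.
Section H.
Context {R : realType}.
Local Notation C := R[i].

Lemma pointwise (E s B k r : R) (f : C -> C) (w : C) (comp : C -> R) (p : R * R) :
  0 < s < 1 -> 0 < k -> 0 <= B -> (forall w, Hbar w -> cabs (f w) <= B) -> Hbar w ->
  (forall z, `|comp z| <= cabs z) ->
  ((`|comp (T_integrand (real_complex R E) s f w (r + k * p.1, r + k * p.2))|)%:E <=
   \sum_(n <oo) (termf B s k ((Num.sqrt 2 * complex.Re w + E - r) / k) n p)%:E)%E.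
Proof.
move=> /andP[s0 s1] k0 B0 fB hw hcomp.
have s0' : 0 <= s by exact: ltW.
have s01 : 0 <= s <= 1 by rewrite s0' ltW.
set m := (Num.sqrt 2 * complex.Re w + E - r) / k.
have S0 : (0 <= \sum_(n <oo) (termf B s k m n p)%:E)%E.
  by apply: nneseries_ge0 => n _ _; rewrite lee_fin termf_ge0.
have [->|[h1 [h2 hb]]] := integrand_bound E s B f w (r + k * p.1, r + k * p.2) s0' B0 fB hw.
  apply: le_trans S0; rewrite lee_fin.
  by have := hcomp 0; rewrite /cabs Normc.normc0.
have [u1p [u1b u1i]] := inv_bound s E (r + k * p.1) w s01 h1.
have [u2p [u2b u2i]] := inv_bound s E (r + k * p.2) w s01 h2.
have kk j : k * `|j - m| = `|Num.sqrt 2 * complex.Re w + E - (r + k * j)|.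
  rewrite -{1}[k]ger0_norm ?ltW // -normrM distrC; congr `|_|.
  by rewrite /m; field; rewrite gt_eqF.
have hk1 : k * `|p.1 - m| <= Num.sqrt 2 * cabs (w + Defs.shift (real_complex R E) (r + k * p.1)) by rewrite kk.
have hk2 : k * `|p.2 - m| <= Num.sqrt 2 * cabs (w + Defs.shift (real_complex R E) (r + k * p.2)) by rewrite kk.
have sb1 := single_bound s k _ m p.1 s0' k0 u1p hk1.
have sb2 := single_bound s k _ m p.2 s0' k0 u2p hk2.
rewrite series_termf //.
set Y1 := ((Num.sqrt 2 * cabs (w + Defs.shift (real_complex R E) (r + k * p.1)))^-1) `^ s.
set Y2 := ((Num.sqrt 2 * cabs (w + Defs.shift (real_complex R E) (r + k * p.2)))^-1) `^ s.
apply: (@le_trans _ _ ((4 * B)%:E * (Y1%:E + Y2%:E))%E); last first.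
  apply: lee_wpmul2l; first by rewrite lee_fin mulr_ge0.
  exact: leeD sb1 sb2.
rewrite -EFinD -EFinM lee_fin; apply: le_trans (hcomp _) _; apply: le_trans hb _.
have -> : 4 * B * (Y1 + Y2) = 2 * B * (2 * (Y1 + Y2)) by ring.
apply: ler_wpM2l; first by rewrite mulr_ge0.
by rewrite mulrDr; apply: lerD.
Qed.
End H.
Section I.
Context {R : realType}.

Lemma pow2s_lt2 (s : R) : 0 < s < 1 -> 2 `^ s < 2.
Proof.
move=> /andP[s0 s1].
have le : 2 `^ s <= 2 `^ 1 by apply: ler_powR => //; [lra | exact: ltW].
rewrite powRr1 // in le; rewrite lt_neqAle le andbT; apply/eqP => h.
have := ln_powR 2 s; rewrite h => /eqP; rewrite -subr_eq0 -[X in X - _]mul1r -mulrBl mulf_eq0.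
have ln2 : 0 < ln (2 : R) by apply: ln_gt0; lra.
move=> /orP[|]; [rewrite subr_eq0 => /eqP; lra | rewrite gt_eqF //].
Qed.

Lemma sum_ind0 M : \sum_(0 <= n < M) (n == 0)%:R <= (1 : R).
Proof.
elim: M => [|M IH]; first by rewrite big_geq.
rewrite big_nat_recr //=; case: M IH => [|M] IH; first by rewrite big_geq // add0r.
by rewrite addr0.
Qed.

Definition Q1 (s N : R) : R := 4 * (2 + 2 * N * 2 `^ s / (1 - 2 `^ s / 2)).

Lemma series_bound (B s k N : R) : 0 <= B -> 0 <= N -> 0 < s < 1 ->
  (\sum_(n <oo) (4 * B * (2 * (k^-1) `^ s * (n == 0)%:R + (k^-1) `^ s * (2 `^ s) ^+ n.+1 *
      (N * (2 * (2^-1) ^+ n))))%:E <= (B * (k^-1) `^ s * Q1 s N)%:E)%E.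
Proof.
move=> B0 N0 hs.
have c0 : 0 <= (k^-1) `^ s by exact: powR_ge0.
have t0 : 0 <= 2 `^ s :> R by exact: powR_ge0.
set rho := 2 `^ s / 2 : R.
have r0 : 0 <= rho by rewrite divr_ge0.
have r1 : rho < 1 by rewrite /rho ltr_pdivrMr // mul1r pow2s_lt2.
apply: eseries_le.
  by move=> n; rewrite !mulr_ge0 // ?addr_ge0 ?mulr_ge0 ?exprn_ge0 // invr_ge0.
move=> M.
set a := 8 * B * (k^-1) `^ s.
set b := 8 * B * (k^-1) `^ s * N * 2 `^ s.
have tv n : 4 * B * (2 * (k^-1) `^ s * (n == 0)%:R + (k^-1) `^ s * (2 `^ s) ^+ n.+1 *
      (N * (2 * (2^-1) ^+ n))) = a * (n == 0)%:R + b * rho ^+ n.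
  rewrite /a /b /rho exprMn exprS; ring.
rewrite (eq_bigr _ (fun n _ => tv n)) big_split /= -!big_distrr /=.
apply: (@le_trans _ _ (a * 1 + b * (1 - rho)^-1)).
  apply: lerD; apply: ler_wpM2l.
  - by rewrite /a !mulr_ge0.
  - exact: sum_ind0.
  - by rewrite /b !mulr_ge0.
  - by apply: geo_le; rewrite r0 r1.
rewrite le_eqVlt; apply/orP; left; apply/eqP; rewrite /a /b /Q1 -/rho.
field.
by rewrite subr_eq0 eq_sym lt_eqF.
Qed.
End I.
Section J.
Context {R : realType}.
Local Notation C := R[i].

Lemma inner_bound (sigma : probability (R * R)%type R) (sg0 sg1 : R -> R) (N0 N1 B s k E r : R)
  (f : C -> C) (w : C) (comp : C -> R) :
  0 < s < 1 -> 0 < k -> 0 <= B -> (forall w, Hbar w -> cabs (f w) <= B) -> Hbar w ->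
  (forall z, `|comp z| <= cabs z) ->
  measurable_fun setT sg0 -> measurable_fun setT sg1 ->
  (forall x, 0 <= sg0 x <= N0) -> (forall x, 0 <= sg1 x <= N1) ->
  (forall A : set R, measurable A ->
     (sigma (A `*` setT) = \int[lebesgue_measure]_(x in A) (sg0 x)%:E)%E) ->
  (forall A : set R, measurable A ->
     (sigma (setT `*` A) = \int[lebesgue_measure]_(x in A) (sg1 x)%:E)%E) ->
  `|Rintegral sigma setT (fun p => comp (T_integrand (real_complex R E) s f w (r + k * p.1, r + k * p.2)))|
    <= B * (k^-1) `^ s * Q1 s (N0 + N1).
Proof.
move=> hs k0 B0 fB hw hc m0 m1 h0 h1 mg0 mg1.
have N00 : 0 <= N0 by case/andP: (h0 0) => a b; exact: le_trans b.
have N10 : 0 <= N1 by case/andP: (h1 0) => a b; exact: le_trans b.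
set m := (Num.sqrt 2 * complex.Re w + E - r) / k.
apply: (absRint_le sigma _ (fun p => (\sum_(n <oo) (termf B s k m n p)%:E)%E)).
  by move=> p; exact: pointwise.
rewrite integral_nneseries //; first last.
- by move=> n p _; rewrite lee_fin termf_ge0.
- by move=> n; exact: mterm.
apply: le_trans (series_bound B s k (N0 + N1) B0 (addr_ge0 N00 N10) hs).
apply: lee_nneseries.
  by move=> n _ _; apply: integral_ge0 => p _; rewrite lee_fin termf_ge0.
by move=> n _; exact: (int_term sigma sg0 sg1 N0 N1 B s k m n B0 m0 m1 h0 h1 mg0 mg1).
Qed.
End J.
Section K.
Context {R : realType}.

Lemma outer_bound (nu h : R -> R) (M : R) : measurable_fun setT nu -> (forall x, 0 <= nu x) ->
  (\int[lebesgue_measure]_x (nu x)%:E = 1)%E -> 0 <= M -> (forall r, `|h r| <= M) ->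
  `|Rintegral lebesgue_measure setT (fun r => nu r * h r)| <= M.
Proof.
move=> mnu nu0 int1 M0 hM.
apply: (absRint_le lebesgue_measure _ (fun r => (M%:E * (nu r)%:E)%E)).
  move=> r; rewrite -EFinM lee_fin normrM ger0_norm // mulrC.
  by apply: ler_wpM2r => //.
rewrite ge0_integralZl_EFin //.
- by rewrite int1 mule1.
- by move=> x _; rewrite lee_fin.
- by apply/measurable_EFinP.
Qed.

Lemma powR_inv (P s : R) : 0 < P -> (P^-1) `^ s = (P `^ s)^-1.
Proof.
move=> P0; rewrite -powR_inv1 ?ltW // -powRrM mulrC powRrM powR_inv1 //.
exact: powR_ge0.
Qed.

End K.
Theorem lemma6p1 (R : realType) (s : R) (hs : 0 < s < 1)
    (Nnu N0 N1 K : R) :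
  exists kappa0 : R,
  forall (nu : R -> R) (sigma : probability (R * R)%type R)
         (sigma0 sigma1 : R -> R),
    density_assumptions nu Nnu K ->
    sigma_assumptions sigma sigma0 sigma1 N0 N1 ->
    forall kappa : R, 0 <= kappa -> kappa0 <= kappa ->
    exists2 c : R, c < 1 &
      forall (E : R) (f : R[i] -> R[i]) (L : R[i]) (B : R),
        in_Cbar f L ->
        (forall w, Hbar w -> cabs (f w) <= B) -> cabs L <= B ->
        forall w, Hbar w -> cabs (T_op nu sigma kappa (E%:C)%C s f w) <= c * B.
Proof.
have [s0 s1] : 0 < s /\ s < 1 by case/andP: hs.
set Qp := Num.max (2 * Q1 s (N0 + N1)) 1.
have Qp0 : 0 < Qp by rewrite lt_max ltr01 orbT.
set P := (2 * Qp) `^ (s^-1).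
have P0 : 0 < P by apply: powR_gt0; rewrite mulr_gt0.
exists (Num.max 1 P).
move=> nu sigma sg0 sg1 [mnu [nu0 [int1 [nuN nuK]]]] [sT [m0 [m1 [h0 [h1 [mg0 mg1]]]]]] kappa k0 kk0.
move: kk0; rewrite ge_max => /andP[k1 kP].
have kp : 0 < kappa by lra.
set c0 := (kappa^-1) `^ s.
have c0ge : 0 <= c0 by exact: powR_ge0.
have c0le : c0 <= (2 * Qp)^-1.
  apply: (@le_trans _ _ ((P^-1) `^ s)).
    apply: ge0_ler_powR; rewrite ?nnegrE ?invr_ge0; try exact: ltW.
    by rewrite lef_pV2 ?posrE.
  rewrite powR_inv // /P -powRrM mulVf ?gt_eqF // powRr1 //.
  by rewrite mulr_ge0 //; exact: ltW.
exists (c0 * Qp).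
  apply: (@le_lt_trans _ _ ((2 * Qp)^-1 * Qp)).
    by apply: ler_wpM2r => //; exact: ltW.
  by rewrite invfM -mulrA mulVf ?gt_eqF // mulr1; lra.
move=> E f L B hf fB LB w hw.
have B0 : 0 <= B := le_trans (cabs_ge0 L) LB.
have N00 : 0 <= N0 by case/andP: (h0 0) => a b; exact: le_trans b.
have N10 : 0 <= N1 by case/andP: (h1 0) => a b; exact: le_trans b.
have Q10 : 0 <= Q1 s (N0 + N1).
  rewrite /Q1 mulr_ge0 // addr_ge0 // mulr_ge0 // ?mulr_ge0 ?addr_ge0 ?powR_ge0 //.
  rewrite invr_ge0 subr_ge0 ler_pdivrMr // mul1r; apply: ltW; exact: pow2s_lt2.
set Min := B * c0 * Q1 s (N0 + N1).
have Min0 : 0 <= Min by apply: mulr_ge0 => //; apply: mulr_ge0.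
rewrite /T_op /law_integral /=.
apply: le_trans (cabs_Complex _ _) _.
apply: (@le_trans _ _ (Min + Min)).
  apply: lerD; apply: outer_bound => // r.
    exact: (inner_bound sigma sg0 sg1 N0 N1 B s kappa E r f w (@complex.Re R) hs kp B0 fB hw (@cabs_Re R) m0 m1 h0 h1 mg0 mg1).
  exact: (inner_bound sigma sg0 sg1 N0 N1 B s kappa E r f w (@complex.Im R) hs kp B0 fB hw (@cabs_Im R) m0 m1 h0 h1 mg0 mg1).
have -> : Min + Min = (B * c0) * (2 * Q1 s (N0 + N1)) by rewrite /Min; ring.
have -> : c0 * Qp * B = (B * c0) * Qp by ring.
apply: ler_wpM2l; first by rewrite mulr_ge0.
by rewrite /Qp le_max lexx.
Qed.
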